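(* Let $(X_B,X_C,X_R)$ be an OCC of a graph $G$, let $f_X$ be a proper $2$-coloring of $G[X_B]$, let $B^\ast \subseteq X_B$ satisfy property $(\star)$, and let $G'$ be the reduced graph. Let $Y \subseteq V(G) \cap V(G')$ be arbitrary. Then there is a closed walk of odd length $F$ in $G$ with $V(F) \cap V(G) \cap V(G') = Y$ if and only if there is a closed walk of odd length $F'$ in $G'$ with $V(F') \cap V(G) \cap V(G') = Y$.
   Context: An odd cycle cut (OCC) of $G$ is a partition $(X_B, X_C, X_R)$ of $V(G)$ such that $G[X_B]$ is bipartite, there is no edge between $X_B$ and $X_R$, and $X_B \cup X_C \neq \emptyset$. Auxiliary graph: $G_{\mathrm{aux}}$ is obtained from a copy of $G[X_B]$ by adding, for each $v \in X_C$, new vertices $v^{(0)}, v^{(1)}$ and, for each $u \in N_G(v) \cap X_B$, the edge $v^{(f_X(u))}u$; $T := \{v^{(i)} : v \in X_C, i \in \{0,1\}\}$. Property $(\star)$ of $B^\ast \subseteq X_B$: for every partition $(T_1,T_2,T_3,T_X)$ of $T$ into four possibly empty parts, if there exists $S \subseteq X_B$ with $|S| \le |T|$ separating $T_i$ and $T_j$ (no connected component of $G_{\mathrm{aux}} - T_X - S$ meets both) for all $1 \le i < j \le 3$, then $B^\ast$ contains such a set $S$ of minimum possible size. Reduced graph $G'$: start from $G - (X_B \setminus B^\ast)$; then, for every unordered pair $\{u,v\}$ of (not necessarily distinct) vertices of $X_C \cup B^\ast$ and every parity $p \in \{\text{even},\text{odd}\}$ such that $G$ contains a $(u,v)$-walk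 of length of parity $p$ that has at least one internal vertex and all of whose internal vertices lie in $X_B \setminus B^\ast$: if $p$ is even, add two new vertices $x, x'$, each adjacent to exactly $u$ and $v$; if $p$ is odd, add four new vertices $x,y,x',y'$ and the edges $ux, xy, yv, ux', x'y', y'v$. All added vertices are distinct and new. Thus $V(G) \cap V(G') = V(G) \setminus (X_B \setminus B^\ast)$. *)

(* Defs.v *)
From mathcomp Require Import all_boot.
Set Implicit Arguments. Unset Strict Implicit. Unset Printing Implicit Defensive.

Section OCCDefs.
Variable V : finType.

Definition simple_graph (G : rel V) : Prop := symmetric G /\ irreflexive G.

Definition proper_2col (G : rel V) (XB : {set V}) (f : V -> bool) : Prop :=
  forall u v, u \in XB -> v \in XB -> G u v -> f u != f v.

Definition is_OCC (G : rel V) (XB XC XR : {set V}) : Prop :=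
  [disjoint XB & XC] /\ [disjoint XB & XR] /\ [disjoint XC & XR] /\
  XB :|: XC :|: XR = setT /\
  (exists f, proper_2col G XB f) /\
  (forall u v, u \in XB -> v \in XR -> ~~ G u v) /\
  XB :|: XC != set0.

(* inl u : copy of u in X_B ; inr (v, i) : the vertex v^(i) for v in X_C *)
Definition aux_vertex := (V + (V * bool))%type.

Definition aux_present (XB XC : {set V}) (a : aux_vertex) : bool :=
  match a with inl u => u \in XB | inr (v, _) => v \in XC end.

Definition aux_edge (G : rel V) (XB XC : {set V}) (f : V -> bool)
    (a b : aux_vertex) : bool :=
  match a, b with
  | inl u, inl w => [&& u \in XB, w \in XB & G u w]
  | inr (v, i), inl u => [&& v \in XC, u \in XB, G v u & i == f u]
  | inl u, inr (v, i) => [&& v \in XC, u \in XB, G v u & i == f u]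
  | _, _ => false
  end.

Definition auxT (XC : {set V}) : {set aux_vertex} :=
  [set a | match a with inr (v, _) => v \in XC | inl _ => false end].

Definition aux_alive (XB XC : {set V}) (TX : {set aux_vertex}) (S : {set V})
    (a : aux_vertex) : bool :=
  [&& aux_present XB XC a, a \notin TX &
      match a with inl u => u \notin S | inr _ => true end].

Definition aux_rel (G : rel V) (XB XC : {set V}) (f : V -> bool) (TX : {set aux_vertex}) (S : {set V}) : rel aux_vertex :=
  fun a b => [&& aux_edge G XB XC f a b, aux_alive XB XC TX S a
                & aux_alive XB XC TX S b].

Definition separates (G : rel V) (XB XC : {set V}) (f : V -> bool) (TX : {set aux_vertex}) (S : {set V})
    (Ti Tj : {set aux_vertex}) : bool :=
  [forall a in Ti, forall b in Tj, ~~ connect (aux_rel G XB XC f TX S) a b].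

Definition separates3 (G : rel V) (XB XC : {set V}) (f : V -> bool) (T1 T2 T3 TX : {set aux_vertex}) S : bool :=
  [&& separates G XB XC f TX S T1 T2, separates G XB XC f TX S T1 T3
    & separates G XB XC f TX S T2 T3].

Definition partition4 (T T1 T2 T3 TX : {set aux_vertex}) : Prop :=
  [disjoint T1 & T2] /\ [disjoint T1 & T3] /\ [disjoint T1 & TX] /\
  [disjoint T2 & T3] /\ [disjoint T2 & TX] /\ [disjoint T3 & TX] /\
  T1 :|: T2 :|: T3 :|: TX = T.

Definition star_property (G : rel V) (XB XC : {set V}) (f : V -> bool) (Bs : {set V}) : Prop :=
  forall T1 T2 T3 TX : {set aux_vertex},
    partition4 (auxT XC) T1 T2 T3 TX ->
    (exists S : {set V}, S \subset XB /\ #|S| <= #|auxT XC| /\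
        separates3 G XB XC f T1 T2 T3 TX S) ->
    exists S : {set V}, S \subset Bs /\ separates3 G XB XC f T1 T2 T3 TX S /\
      (forall S' : {set V}, S' \subset XB -> #|S'| <= #|auxT XC| ->
          separates3 G XB XC f T1 T2 T3 TX S' -> #|S| <= #|S'|).

(* A (u,v)-walk in G of parity p (true = odd) with at least one internal
   vertex, all internal vertices in A: u :: s ++ [v] with s nonempty. *)
Definition special_walk (G : rel V) (A : {set V}) (u v : V) (p : bool) : Prop :=
  exists s : seq V, [/\ s != [::], path G u (rcons s v),
                        all (fun x => x \in A) s & odd (size s).+1 = p].

(* gadget vertex (u, v, p, i): the i-th new vertex added for the unordered pair
   {u,v} (represented with enum_rank u <= enum_rank v) and parity p.
   p = false (even): i = 0 is x, i = 1 is x'.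
   p = true  (odd) : i = 0 is x, 1 is y, 2 is x', 3 is y'. *)
Definition gadget := (V * V * bool * 'I_4)%type.
Definition red_vertex := (V + gadget)%type.

Definition gadget_present (G : rel V) (XB XC Bs : {set V}) (g : gadget) : Prop :=
  match g with (u, v, p, i) =>
    [/\ u \in XC :|: Bs, v \in XC :|: Bs, (enum_rank u <= enum_rank v)%N
      & p || (i < 2)%N] /\ special_walk G (XB :\: Bs) u v p
  end.

Definition gadget_adjV (g : gadget) (a : V) : bool :=
  match g with (u, v, p, i) =>
    if p then ((i == 0 :> nat) || (i == 2 :> nat)) && (a == u)
              || ((i == 1 :> nat) || (i == 3 :> nat)) && (a == v)
    else (a == u) || (a == v)
  end.

Definition gadget_adjG (g h : gadget) : bool :=
  match g, h with (u, v, p, i), (u', v', p', j) =>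
    [&& u == u', v == v', p == p', p &
       [|| (i == 0 :> nat) && (j == 1 :> nat), (i == 1 :> nat) && (j == 0 :> nat),
           (i == 2 :> nat) && (j == 3 :> nat) | (i == 3 :> nat) && (j == 2 :> nat)]]
  end.

Definition red_edge (G : rel V) (XB XC Bs : {set V}) (a b : red_vertex) : Prop :=
  match a, b with
  | inl x, inl y => x \notin XB :\: Bs /\ y \notin XB :\: Bs /\ G x y
  | inl x, inr g => gadget_present G XB XC Bs g /\ gadget_adjV g x
  | inr g, inl x => gadget_present G XB XC Bs g /\ gadget_adjV g x
  | inr g, inr h => gadget_present G XB XC Bs g /\ gadget_present G XB XC Bs h
                    /\ gadget_adjG g h
  end.

End OCCDefs.

Fixpoint walk_path {T : Type} (e : T -> T -> Prop) (x : T) (s : seq T) : Prop :=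
  match s with
  | [::] => True
  | y :: s' => e x y /\ walk_path e y s'
  end.

Definition odd_closed_walk {T : Type} (e : T -> T -> Prop) (x : T) (s : seq T) : Prop :=
  walk_path e x s /\ last x s = x /\ odd (size s).

(* Main.v *)
Require Import Defs.
From mathcomp Require Import all_boot.
From Stdlib Require Import ClassicalEpsilon.
Set Implicit Arguments. Unset Strict Implicit. Unset Printing Implicit Defensive.

Lemma walk_path_cat {T : Type} (e : T -> T -> Prop) x s1 s2 :
  walk_path e x (s1 ++ s2) <-> walk_path e x s1 /\ walk_path e (last x s1) s2.
Proof.
elim: s1 x => [|y s1 IH] x /=; first by tauto.
rewrite IH; tauto.
Qed.

Lemma walk_path_pathE (T : Type) (G : rel T) x s :
  walk_path (fun a b => G a b) x s <-> path G x s.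
Proof.
elim: s x => [|y s IH] x //=.
rewrite IH; split; [case=> -> -> //| by case/andP].
Qed.

Lemma path_rcons_rev (T : Type) (G : rel T) : symmetric G ->
  forall a w b, path G a (rcons w b) -> path G b (rcons (rev w) a).
Proof.
move=> sG a w b H.
have := rev_path G a (rcons w b).
rewrite last_rcons belast_rcons rev_cons => ->.
by rewrite (@eq_path _ _ G) // => x y; rewrite sG.
Qed.
Section Main.
Variable V : finType.
Variable G : rel V.
Variables XB XC XR Bs : {set V}.
Variable f : V -> bool.
Hypothesis sG : symmetric G.
Hypothesis occ : is_OCC G XB XC XR.
Hypothesis sub : Bs \subset XB.

Local Notation A := (XB :\: Bs).
Local Notation R := (red_edge G XB XC Bs).

Lemma inA_XB x : x \in A -> x \in XB.
Proof. by rewrite inE => /andP[]. Qed.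

Lemma inXCBs a h : a \notin A -> h \in XB -> G h a -> a \in XC :|: Bs.
Proof.
case: occ => _ [_ [_ [cov [_ [noXR _]]]]] aA hB Gha.
have := in_setT a.
rewrite -cov !inE; case/orP => [/orP[aB|->//]|aR].
- by move: aA; rewrite !inE aB andbT negbK => ->; rewrite orbT.
- by move: (noXR _ _ hB aR); rewrite Gha.
Qed.

Lemma special_rev u v p : special_walk G A u v p -> special_walk G A v u p.
Proof.
case=> s [s0 ps As ps'].
exists (rev s); split.
- by move: s0; rewrite -!size_eq0 size_rev.
- exact: path_rcons_rev.
- by rewrite all_rev.
- by rewrite size_rev.
Qed.

Definition o0 : 'I_4 := @Ordinal 4 0 isT.
Definition o1 : 'I_4 := @Ordinal 4 1 isT.

Lemma segment a b pre : a \notin A -> b \notin A -> all (fun x => x \in A) pre ->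
  path G a (rcons pre b) ->
  exists seg : seq (red_vertex V),
    walk_path R (inl a) (rcons seg (inl b)) /\ (forall y, inl y \notin seg) /\
    odd (size seg) = odd (size pre).
Proof.
move=> aA bA allA.
case: pre allA => [|h pre'] allA.
  move=> /= /andP[Gab _]; exists [::]; split => //=.
move=> P; set pre := h :: pre' in allA P *.
have hA : h \in A by move: allA => /= /andP[].
have lA : last h pre' \in A by apply: (allP allA); exact: mem_last.
move: (P); rewrite rcons_path => /andP[P1 Glb].
move: (P1) => /= /andP[Gah _].
have aC : a \in XC :|: Bs by apply: (inXCBs aA (inA_XB hA)); rewrite sG.
have bC : b \in XC :|: Bs by apply: (inXCBs bA (inA_XB lA)).
set p := odd (size pre).+1.
have sw : special_walk G A a b p by exists pre; split.
have sw' := special_rev sw.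
case: (leqP (enum_rank a) (enum_rank b)) => rk.
- case pE: p sw => sw.
  + exists [:: inr (a, b, true, o0); inr (a, b, true, o1)].
    have pr : forall i, gadget_present G XB XC Bs (a, b, true, i) by move=> i; split.
    split; last split.
    * by rewrite /= !eqxx /=; do 3! (split => //).
    * by move=> y; rewrite !inE.
    * by move: pE; rewrite /p /=; case: odd.
  + exists [:: inr (a, b, false, o0)].
    have pr : gadget_present G XB XC Bs (a, b, false, o0) by split.
    split; last split.
    * by rewrite /= !eqxx /= orbT; do 2! (split => //).
    * by move=> y; rewrite !inE.
    * by move: pE; rewrite /p /=; case: odd.
- have rk' : (enum_rank b <= enum_rank a)%N by apply: ltnW.
  case pE: p sw' => sw'.
  + exists [:: inr (b, a, true, o1); inr (b, a, true, o0)].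
    have pr : forall i, gadget_present G XB XC Bs (b, a, true, i) by move=> i; split.
    split; last split.
    * by rewrite /= !eqxx /=; do 3! (split => //).
    * by move=> y; rewrite !inE.
    * by move: pE; rewrite /p /=; case: odd.
  + exists [:: inr (b, a, false, o0)].
    have pr : gadget_present G XB XC Bs (b, a, false, o0) by split.
    split; last split.
    * by rewrite /= !eqxx /= orbT; do 2! (split => //).
    * by move=> y; rewrite !inE.
    * by move: pE; rewrite /p /=; case: odd.
Qed.

Lemma conv w : forall a pre, a \notin A -> all (fun x => x \in A) pre ->
  path G a (pre ++ w) -> last a (pre ++ w) \notin A ->
  exists t, walk_path R (inl a) t /\ last (inl a) t = inl (last a (pre ++ w)) /\
    odd (size t) = odd (size (pre ++ w)) /\
    forall y, y \notin A -> (inl y \in inl a :: t) = (y \in a :: pre ++ w).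
Proof.
elim: w => [|b w IH] a pre aA allA.
  rewrite cats0; case: pre allA => [|h pre'] allA.
    by move=> _ _; exists [::]; split => //=; split => //; split => // y _; rewrite !inE.
  move=> _ /negP []; apply: (allP allA); exact: (mem_last h pre').
case bAc: (b \in A).
  rewrite -cat_rcons => P L.
  apply: IH => //; by rewrite all_rcons bAc.
move/negbT: bAc => bA.
rewrite -cat_rcons cat_path last_cat last_rcons => /andP[P1 P2] L.
have [seg [Ws [Ns Os]]] := segment aA bA allA P1.
have [t' [Wt [Lt [Ot Mt]]]] : exists t', walk_path R (inl b) t' /\ last (inl b) t' = inl (last b ([::] ++ w)) /\
    odd (size t') = odd (size ([::] ++ w)) /\
    forall y, y \notin A -> (inl y \in inl b :: t') = (y \in b :: [::] ++ w).
  by apply: IH.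
exists (rcons seg (inl b) ++ t'); split; last split; last split.
- by apply/walk_path_cat; rewrite last_rcons.
- by rewrite last_cat last_rcons Lt.
- by rewrite size_cat size_rcons size_cat size_rcons !oddD /= Os Ot.
- move=> y yA.
  have ypre : y \notin pre by apply/negP => /(allP allA); rewrite (negbTE yA).
  have E : forall u v : V, (inl u == inl v :> red_vertex V) = (u == v).
    by move=> u v; apply/eqP/eqP => [[]|->].
  move: (Mt y yA); rewrite /= !(in_cons, mem_cat, mem_rcons) !E => Mt'.
  rewrite (negbTE (Ns y)) (negbTE ypre) /= orbF.
  by rewrite Mt'.
Qed.

Lemma bip : proper_2col G XB f -> forall s x, x \in XB -> all (fun y => y \in XB) s ->
  path G x s -> f (last x s) = f x (+) odd (size s).
Proof.
move=> pf; elim=> [|y s IH] x xB /=; first by rewrite addbF.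
case/andP=> yB aB /andP[Gxy P].
rewrite (IH y yB aB P).
have := pf _ _ xB yB Gxy.
by case: (f x); case: (f y); case: (odd _).
Qed.

Lemma dir1 x s : proper_2col G XB f -> path G x s -> last x s = x -> odd (size s) ->
  exists x' t, odd_closed_walk R x' t /\
    [set y | (y \notin A) && (inl y \in x' :: t)] = [set y | y \in x :: s] :&: ~: A.
Proof.
move=> pf P Lx Os.
have xs : x \in s.
  case: s P Lx Os => [|h s'] //= _ <- _; exact: mem_last.
case/boolP: (all (fun y => y \in A) s) => [allA|/allPn [z zs zA]].
  have allB : all (fun y => y \in XB) s.
    by apply: sub_all allA => y; apply: inA_XB.
  have xB : x \in XB by apply: inA_XB; exact: (allP allA).
  by move: (bip pf xB allB P); rewrite Lx Os addbT; case: (f x).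
have cyc : cycle G s by rewrite (cycle_path x) Lx.
case: (rot_to zs) => i r Er.
have : cycle G (z :: r) by rewrite -Er rot_cycle.
rewrite /= => Pz.
have [t [Wt [Lt [Ot Mt]]]] := @conv (rcons r z) z [::] zA isT Pz ltac:(by rewrite /= last_rcons).
exists (inl z), t; split.
  split => //; split; first by rewrite Lt /= last_rcons.
  rewrite Ot /= size_rcons.
  have Hs : size (z :: r) = size s by rewrite -Er size_rot.
  by move: Os; rewrite -Hs.
apply/setP => y; rewrite [in LHS]in_set in_setI in_setC [y \in [set _ | _]]in_set.
case yA: (y \in A); rewrite /= ?andbF ?andbT //.
rewrite Mt ?yA //=.
have H1 : (y \in z :: r) = (y \in s) by rewrite -Er mem_rot.
have H2 : (y \in rcons r z) = (y \in z :: r) by rewrite mem_rcons.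
have H3 : (y \in x :: s) = (y \in s).
  by rewrite in_cons; case: (y == x) /eqP => // ->; rewrite xs.
rewrite H3 -H1 !in_cons H2 in_cons.
by case: (y == z).
Qed.

Definition swP u v p (s : seq V) : Prop :=
  [/\ s != [::], path G u (rcons s v), all (fun x => x \in A) s & odd (size s).+1 = p].
Definition sw u v p : seq V := epsilon (inhabits [::]) (swP u v p).
Definition phi (r : red_vertex V) : V :=
  match r with inl x => x | inr (u, v, p, i) => nth u (sw u v p) (if p && odd i then 1 else 0) end.
Definition good (r : red_vertex V) := forall y, y \notin A -> (phi r == y) = (r == inl y).

Lemma sw_spec u v p : special_walk G A u v p -> swP u v p (sw u v p).
Proof. move=> H; exact: epsilon_spec. Qed.

Lemma good_inl x : good (inl x).
Proof. by move=> y _ /=; apply/eqP/eqP => [->|[]]. Qed.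

Lemma present_good g : gadget_present G XB XC Bs g -> good (inr g).
Proof.
move=> Hg y yA; case: g Hg => [[[u v] p] i] [_ spw].
have [s0 P As Ps] := sw_spec spw.
have inA : phi (inr (u, v, p, i)) \in A.
  rewrite /=; apply: (allP As); apply: mem_nth.
  case: (sw u v p) s0 Ps => [|h [|h2 s'']] //= _.
    by move=> E; rewrite -E.
  by case: (p && odd i).
have -> : (phi (inr (u, v, p, i)) == y) = false.
  by apply/negbTE; apply/eqP => E; move: yA; rewrite -E inA.
by [].
Qed.

Lemma path_prefix (a b : V) X : path G a (rcons X b) -> path G a X.
Proof. by rewrite rcons_path => /andP[]. Qed.

Lemma gadget_to g x : gadget_present G XB XC Bs g -> gadget_adjV g x ->
  exists w, [/\ path G x (rcons w (phi (inr g))), all (fun y => y \in A) w & ~~ odd (size w)].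
Proof.
case: g => [[[u v] p] i] [_ spw] adj.
have [s0 P As Ps] := sw_spec spw.
clear spw; rewrite /phi.
move: s0 P As Ps; case: (sw u v p) => [|h s'] // _ P As Ps.
have Pr := path_rcons_rev sG P.
rewrite rev_cons in Pr.
have As' : all (fun y => y \in A) s' by move: As => /= /andP[].
clear As; case: p Ps adj => Ps adj.
- move: Ps => /= Ps.
  case: s' P Pr As' Ps => [|h2 s''] P Pr As' Ps; first by [].
  rewrite rev_cons in Pr.
  move: Pr => /path_prefix /path_prefix Pr.
  case: i adj => [[|[|[|[|m]]]] Hi] //= adj.
  + move: adj; rewrite ?orbF ?orFb => /eqP ->; exists [::]; split => //=.
    rewrite andbT; by move: P => /= /andP[].
  + move: adj; rewrite ?orbF ?orFb => /eqP ->; exists (rev s''); split; [by [] | by rewrite all_rev; move: As' => /= /andP[] | by rewrite size_rev; move: Ps => /=; case: (odd _)].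
  + move: adj; rewrite ?orbF ?orFb => /eqP ->; exists [::]; split => //=.
    rewrite andbT; by move: P => /= /andP[].
  + move: adj; rewrite ?orbF ?orFb => /eqP ->; exists (rev s''); split; [by [] | by rewrite all_rev; move: As' => /= /andP[] | by rewrite size_rev; move: Ps => /=; case: (odd _)].
- rewrite andFb.
  case/orP: adj => /eqP ->.
  + exists [::]; split => //=.
    rewrite andbT; by move: P => /= /andP[].
  + move: Pr => /path_prefix Pr.
    exists (rev s'); split; [by [] | by rewrite all_rev | by rewrite size_rev; move: Ps => /=; case: (odd _)].
Qed.

Lemma rev_w a b : (exists w, [/\ path G a (rcons w b), all (fun y => y \in A) w & ~~ odd (size w)]) ->
  exists w, [/\ path G b (rcons w a), all (fun y => y \in A) w & ~~ odd (size w)].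
Proof.
case=> w [P Aw Ow]; exists (rev w); split.
- exact: path_rcons_rev.
- by rewrite all_rev.
- by rewrite size_rev.
Qed.

Lemma edge a b : R a b -> good a /\ good b /\
  exists w, [/\ path G (phi a) (rcons w (phi b)), all (fun y => y \in A) w & ~~ odd (size w)].
Proof.
case: a b => [x|g] [y|h] /=.
- case=> xA [yA Gxy]; split; first exact: good_inl.
  split; first exact: good_inl.
  by exists [::]; split => //=; rewrite Gxy.
- case=> pr adj; split; first exact: good_inl.
  split; first exact: present_good.
  exact: gadget_to.
- case=> pr adj; split; first exact: present_good.
  split; first exact: good_inl.
  by apply: rev_w; apply: gadget_to.
- case=> pg [ph adj]; split; first exact: present_good.
  split; first exact: present_good.
  move: pg ph adj.
  case: g => [[[u v] p] i]; case: h => [[[u' v'] p'] j] pg ph.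
  case/and5P => /eqP eu /eqP ev /eqP ep pt adj.
  subst u' v' p'; case: p pt pg ph => // _ pg ph.
  case: pg => _ spw; clear ph.
  have [s0 P As Ps] := sw_spec spw.
  rewrite /phi /=.
  move: s0 P As Ps; case: (sw u v true) => [|h1 [|h2 s'']] //= _.
  case/andP=> G1 /andP[G2 _] _ _.
  have G2' : G h2 h1 by rewrite sG.
  case: i adj => [[|[|[|[|m]]]] Hi] //=; case: j => [[|[|[|[|n]]]] Hj] //= _;
    by exists [::]; split => //=; rewrite ?G2 ?G2'.
Qed.

Lemma walk s : forall a, walk_path R a s -> good a ->
  exists t, [/\ path G (phi a) t, last (phi a) t = phi (last a s),
    odd (size t) = odd (size s) &
    forall y, y \notin A -> (y \in phi a :: t) = (inl y \in a :: s)].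
Proof.
elim: s => [|b s IH] a W ga.
  exists [::]; split => // y yA; rewrite !inE eq_sym (ga y yA); by [].
case: W => e W.
have [_ [gb [w [Pw Aw Ow]]]] := edge e.
have [t' [Pt Lt Ot Mt]] := IH b W gb.
exists (rcons w (phi b) ++ t'); split.
- by rewrite cat_path last_rcons Pw Pt.
- by rewrite last_cat last_rcons Lt.
- by rewrite size_cat size_rcons /= oddD /= Ot; move: Ow; case: (odd (size w)).
- move=> y yA.
  have yw : y \notin w by apply/negP => /(allP Aw); rewrite (negbTE yA).
  have := Mt y yA; rewrite !in_cons => <-.
  rewrite mem_cat mem_rcons in_cons (negbTE yw) orbF.
  by rewrite eq_sym (ga y yA) eq_sym.
Qed.

Lemma dir2 x s : odd_closed_walk R x s ->
  exists x' t, odd_closed_walk (fun a b => G a b) x' t /\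
    [set y | y \in x' :: t] :&: ~: A = [set y | (y \notin A) && (inl y \in x :: s)].
Proof.
case=> W [L O].
have gx : good x.
  by case: s W L O => [|b s'] //= [e _] _ _; case: (edge e).
have [t [Pt Lt Ot Mt]] := walk W gx.
exists (phi x), t; split.
  split; first exact/walk_path_pathE.
  by split; [rewrite Lt L | rewrite Ot].
apply/setP => y; rewrite [in RHS]in_set in_setI in_setC [y \in [set _ | _]]in_set.
case yA: (y \in A); rewrite /= ?andbF ?andbT //.
by rewrite Mt ?yA.
Qed.

End Main.


Theorem mainTheorem17 (V : finType) (G : rel V) (XB XC XR Bs : {set V})
    (f : V -> bool) (Y : {set V}) :
  simple_graph G ->
  is_OCC G XB XC XR ->
  proper_2col G XB f ->
  Bs \subset XB ->
  star_property G XB XC f Bs ->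
  Y \subset ~: (XB :\: Bs) ->
  (exists (x : V) (s : seq V),
      odd_closed_walk (fun a b => G a b) x s /\
      [set y | y \in x :: s] :&: ~: (XB :\: Bs) = Y) <->
  (exists (x : red_vertex V) (s : seq (red_vertex V)),
      odd_closed_walk (red_edge G XB XC Bs) x s /\
      [set y | (y \notin XB :\: Bs) && (inl y \in x :: s)] = Y).
Proof.
case=> sG _ occ pf sub _ _; split.
- case=> x [s [[W [L O]] E]].
  have [x' [t [C E']]] := dir1 Bs sG occ pf (proj1 (walk_path_pathE G x s) W) L O.
  by exists x', t; split => //; rewrite E' E.
- case=> x [s [C E]].
  have [x' [t [C' E']]] := dir2 sG C.
  by exists x', t; split => //; rewrite E' E.
Qed.
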